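(* $\mathcal{VMU} \subsetneq \mathcal{LEAN} \setminus \{\top\}$.
   Context: Literals come with a fixed-point-free involution $x \mapsto \overline{x}$; variables are positive literals. A clause is a finite set $C$ of literals with $C \cap \overline{C} = \emptyset$; a clause-set is a finite set of clauses; $\top$ is the empty clause-set. $\mathrm{var}(F)$ is the set of variables of $F$. A partial assignment is a map $\varphi : V \to \{0,1\}$ on a finite set $V = \mathrm{var}(\varphi)$ of variables, $\varphi(\overline{v}) = 1 - \varphi(v)$; $F$ is satisfiable iff some partial assignment makes some literal of every clause true. An autarky for $F$ is a partial assignment $\varphi$ such that every clause of $F$ containing a literal falsified by $\varphi$ also contains a literal satisfied by $\varphi$. $\mathcal{LEAN}$ is the class of clause-sets $F$ with no autarky $\varphi$ such that $\mathrm{var}(\varphi) \cap \mathrm{var}(F) \ne \emptyset$. $\mathcal{VMU}$ is the class of unsatisfiable clause-sets $F$ such that every unsatisfiable $F' \subseteq F$ has $\mathrm{var}(F') = \mathrm{var}(F)$. *)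

(* Defs.v *)
From mathcomp Require Import all_boot.
From mathcomp Require Import finmap.
Set Implicit Arguments. Unset Strict Implicit. Unset Printing Implicit Defensive.
Local Open Scope fset_scope.
Local Open Scope fmap_scope.

(* Variables are natural numbers (an infinite supply of variables).
   A literal is a pair (v, b): b = true is the positive literal v,
   b = false is its complement.  The involution flips the sign. *)
Definition var := nat.
Definition lit := (var * bool)%type.
Definition compl (x : lit) : lit := (x.1, ~~ x.2).

Definition is_clause (C : {fset lit}) : Prop :=
  forall x, x \in C -> compl x \notin C.

Definition is_clauseset (F : {fset {fset lit}}) : Prop :=
  forall C, C \in F -> is_clause C.

Definition top : {fset {fset lit}} := fset0.

Definition vars (F : {fset {fset lit}}) : {fset var} :=
  [fset x.1 | x in \bigcup_(C <- F) C].

Definition pass := {fmap var -> bool}.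
Definition pvars (phi : pass) : {fset var} := domf phi.

Definition lit_val (phi : pass) (x : lit) : option bool :=
  omap (fun a => a == x.2) phi.[? x.1].

Definition satisfies_lit (phi : pass) (x : lit) : bool := lit_val phi x == Some true.
Definition falsifies_lit (phi : pass) (x : lit) : bool := lit_val phi x == Some false.

Definition satisfiable (F : {fset {fset lit}}) : Prop :=
  exists phi : pass, forall C, C \in F -> exists2 x, x \in C & satisfies_lit phi x.

Definition autarky (phi : pass) (F : {fset {fset lit}}) : Prop :=
  forall C, C \in F ->
    (exists2 x, x \in C & falsifies_lit phi x) ->
    (exists2 x, x \in C & satisfies_lit phi x).

Definition LEAN (F : {fset {fset lit}}) : Prop :=
  is_clauseset F /\
  ~ (exists phi : pass, autarky phi F /\ pvars phi `&` vars F != fset0).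

Definition VMU (F : {fset {fset lit}}) : Prop :=
  is_clauseset F /\ ~ satisfiable F /\
  forall F', F' `<=` F -> ~ satisfiable F' -> vars F' = vars F.

(* Main.v *)
Require Import Defs.
From mathcomp Require Import all_boot.
From mathcomp Require Import finmap.
Local Open Scope fset_scope.
Local Open Scope fmap_scope.

Lemma top_sat : satisfiable top.
Proof. by exists [fmap] => C; rewrite in_fset0. Qed.

Lemma vmu_lean F : VMU F -> LEAN F.
Proof.
case=> [cs [unsat vmu]]; split=> // -[phi [aut]].
set touched := fun C : {fset lit} => has (fun x : lit => x.1 \in domf phi) C.
set F' := [fset C in F | ~~ touched C].
have sub : F' `<=` F by apply/fsubsetP=> C; rewrite inE => /andP[].
have uF' : ~ satisfiable F'.
  move=> [psi Hpsi]; apply: unsat; exists (catf psi phi) => C CF.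
  case tC: (touched C).
    move/hasP: tC => [x xC xd].
    case: (boolP (satisfies_lit phi x)) => sx.
      exists x => //; move: sx; rewrite /satisfies_lit /lit_val fnd_cat xd.
      done.
    have [y yC sy] : exists2 y, y \in C & satisfies_lit phi y.
      apply: aut => //; exists x => //.
      move: sx; rewrite /falsifies_lit /satisfies_lit /lit_val.
      by rewrite (in_fnd xd) /=; case: (phi.[xd] == x.2).
    exists y => //; move: sy; rewrite /satisfies_lit /lit_val fnd_cat.
    by case: (boolP (y.1 \in domf phi)) => // /not_fnd ->.
  have C' : C \in F' by rewrite !inE CF tC.
  have [x xC sx] := Hpsi C C'.
  exists x => //; rewrite /satisfies_lit /lit_val fnd_cat.
  have -> : (x.1 \in domf phi) = false.
    apply/negP => xd; move/negP: tC; apply; apply/hasP; by exists x.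
  exact: sx.
have eqv := vmu F' sub uF'.
case/fset0Pn => v; rewrite in_fsetI -eqv => /andP[vd].
case/imfsetP => x /= /bigfcupP [C /andP[] ]; rewrite inE => /andP[_ ntC] _ xC vx; subst v.
move/negP: ntC; apply; apply/hasP; by exists x.
Qed.

Definition ex : {fset {fset lit}} :=
  [fset fset0; [fset (0, true)]; [fset (0, false)]].

Lemma ex_lean : LEAN ex.
Proof.
split.
  move=> C; rewrite !inE => /orP[/orP[]|] /eqP -> x; rewrite ?inE //.
    by move/eqP ->.
  by move/eqP ->.
move=> [phi [aut /fset0Pn [v]]]; rewrite in_fsetI => /andP[vd].
case/imfsetP => x /= /bigfcupP [C /andP[CF _] xC] vx.
have v0 : v = 0.
  move: CF xC; rewrite !inE => /orP[/orP[]|] /eqP ->; rewrite ?inE //.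
    by move/eqP => ex; rewrite vx ex.
  by move/eqP => ex; rewrite vx ex.
move: vd; rewrite v0 /pvars => vd.
have [b eb] : {b | phi.[vd] = b} by exists phi.[vd].
have Cin : [fset (0, ~~ b)] \in ex by case: b {eb}; rewrite !inE /= eqxx ?orbT.
have [|y] := aut _ Cin.
  exists (0, ~~ b); first by rewrite inE.
  rewrite /falsifies_lit /lit_val (in_fnd vd) /= eb.
  by case: b {eb Cin}.
rewrite inE => /eqP ->; rewrite /satisfies_lit /lit_val (in_fnd vd) /= eb.
by case: b {eb Cin}.
Qed.

Lemma ex_not_vmu : ~ VMU ex.
Proof.
case=> _ [_ H].
have sub : [fset fset0] `<=` ex by apply/fsubsetP=> C; rewrite !inE => ->.
have uns : ~ satisfiable [fset (fset0 : {fset lit})].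
  move=> [phi Hphi]; have [x] := Hphi fset0 (fset11 _).
  by rewrite in_fset0.
have := H _ sub uns.
move/(congr1 (fun s => 0 \in s)).
have -> : 0 \in vars ex.
  apply/imfsetP; exists (0, true) => //; apply/bigfcupP.
  exists [fset (0, true)]; rewrite ?inE /= ?eqxx ?orbT //.
have -> : (0 \in vars [fset fset0]) = false.
  apply/negP => /imfsetP [x /= /bigfcupP [C /andP[]]].
  by rewrite inE => /eqP -> _; rewrite in_fset0.
done.
Qed.

Theorem lemma4p3 :
  (forall F : {fset {fset lit}}, VMU F -> LEAN F /\ F <> top) /\
  (exists F : {fset {fset lit}}, LEAN F /\ F <> top /\ ~ VMU F).
Proof.
split.
  move=> F HF; split; first exact: vmu_lean.
  by move=> E; case: HF => _ [uns _]; apply: uns; rewrite E; exact: top_sat.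
exists ex; split; first exact: ex_lean.
split; last exact: ex_not_vmu.
move/(congr1 (fun s => fset0 \in s)); rewrite /top in_fset0 !inE.
by [].
Qed.
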